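(* Let $\Psi$ be the endofunctor on digraphs defined as follows: for a digraph $H$, the vertices of $\Psi H$ are the arcs of $H$, and $((a,b),(c,d))$ is an arc of $\Psi H$ iff $(b,c)$ is an arc of $H$ (equivalently, $(a,b),(b,c),(c,d)$ is a directed walk of length 3 in $H$). Let $\mathcal T$ be a set of oriented trees that is a complete set of obstructions for a digraph $H$. Then the set $\Psi\text{-Sproink}(\mathcal T)=\{T/{\sim_b},\ T/{\sim_r} : T\in\mathcal T\}$ (each with loops removed) is a complete set of obstructions for $\Psi H$.
   Context: Digraphs are finite; homomorphisms are arc-preserving vertex maps. A set $\mathcal F$ is a complete set of obstructions for $H$ if for all digraphs $G$: $G\to H$ iff no $F\in\mathcal F$ admits a homomorphism to $G$. An oriented tree is a digraph whose underlying undirected graph is a tree; its algebraic height $h$ is the minimum number of arcs of a directed path $\vec P_h$ (vertices $0,\dots,h$, arcs $(i,i+1)$) to which it maps. For an oriented tree $T$ of algebraic height $h$ let $t:T\to\vec P_h$ be the unique such homomorphism (for $T$ connected with at least one arc). Blue arcs of $T$ are arcs $(x,y)$ with $t(x)$ even; red arcs are arcs $(x,y)$ with $t(x)$ odd. $x\sim_b y$ iff the (undirected) path in $T$ from $x$ to $y$ consists only of blue arcs; $x\sim_r y$ iff it consists only of red arcs. For an equivalence $\sim$, the quotient $T/{\sim}$ has the classes as vertices and $(X,Y)$ an arc iff some $x\in X,y\in Y$ have $(x,y)\in A(T)$; ''with loops removed'' means arcs $(X,X)$ are deleted. *)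

(* Defs.v *)
From mathcomp Require Import all_boot.
Set Implicit Arguments. Unset Strict Implicit. Unset Printing Implicit Defensive.

Record digraph := Digraph { vtx : finType; arc : rel vtx }.

Definition hom (G H : digraph) : Prop :=
  exists f : vtx G -> vtx H, forall x y, arc x y -> arc (f x) (f y).

Definition complete_obstructions (F : digraph -> Prop) (H : digraph) : Prop :=
  forall G : digraph, hom G H <-> ~ (exists D, F D /\ hom D G).

Definition uadj (T : digraph) : rel (vtx T) := fun x y => arc x y || arc y x.

Definition oriented_tree (T : digraph) : Prop :=
  [/\ 0 < #|vtx T|,
      (forall x : vtx T, ~~ arc x x),
      (forall x y : vtx T, arc x y -> ~~ arc y x),
      (forall x y : vtx T, connect (@uadj T) x y) &
      (forall c : seq (vtx T), 3 <= size c -> ~~ ucycleb (@uadj T) c)].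

(* t : T -> P_h is a homomorphism to the directed path 0 -> 1 -> ... -> h. *)
Definition path_hom (T : digraph) (h : nat) (t : vtx T -> nat) : Prop :=
  (forall x, t x <= h) /\ (forall x y, arc x y -> t y = (t x).+1).

Definition alg_height (T : digraph) (h : nat) : Prop :=
  (exists t, @path_hom T h t) /\ (forall h' t', @path_hom T h' t' -> h <= h').

Definition blue_arc (T : digraph) (t : vtx T -> nat) : rel (vtx T) :=
  fun x y => arc x y && ~~ odd (t x).
Definition red_arc (T : digraph) (t : vtx T -> nat) : rel (vtx T) :=
  fun x y => arc x y && odd (t x).

Definition sym_closure (V : Type) (r : rel V) : rel V := fun x y => r x y || r y x.
Definition blue_eq (T : digraph) (t : vtx T -> nat) : rel (vtx T) :=
  connect (sym_closure (blue_arc t)).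
Definition red_eq (T : digraph) (t : vtx T -> nat) : rel (vtx T) :=
  connect (sym_closure (red_arc t)).

Definition classes (T : digraph) (eqv : rel (vtx T)) : {set {set vtx T}} :=
  [set [set y | eqv x y] | x : vtx T].
Definition quot_vtx (T : digraph) (eqv : rel (vtx T)) : finType :=
  {C : {set vtx T} | C \in classes eqv}.
Definition quot_arc (T : digraph) (eqv : rel (vtx T)) : rel (quot_vtx eqv) :=
  fun X Y => (val X != val Y) &&
     [exists x : vtx T, [exists y : vtx T,
        [&& x \in val X, y \in val Y & arc x y]]].
Definition quot_loopless (T : digraph) (eqv : rel (vtx T)) : digraph :=
  @Digraph (quot_vtx eqv) (@quot_arc T eqv).

Definition psi_sproink (TT : digraph -> Prop) (D : digraph) : Prop :=
  exists T, TT T /\ exists h (t : vtx T -> nat),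
    [/\ @alg_height T h, @path_hom T h t &
        (D = quot_loopless (blue_eq t) \/ D = quot_loopless (red_eq t))].

Definition psi_vtx (H : digraph) : finType :=
  {p : vtx H * vtx H | arc p.1 p.2}.
Definition psi_arc (H : digraph) : rel (psi_vtx H) :=
  fun p q => arc (val p).2 (val q).1.
Definition Psi (H : digraph) : digraph := @Digraph (psi_vtx H) (@psi_arc H).

(* Main.v *)
Require Import Defs.
From mathcomp Require Import all_boot.
From mathcomp Require Import zify.
From Stdlib Require Import Classical.
Set Implicit Arguments. Unset Strict Implicit. Unset Printing Implicit Defensive.

Lemma connect_inv (V : finType) (e : rel V) (A : Type) (F : V -> A) :
  (forall x y, e x y -> F x = F y) -> forall x y, connect e x y -> F x = F y.
Proof.
move=> H x y /connectP[p pth ->]; elim: p x pth => //= z p IH x /andP[exz pz].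
by rewrite (H _ _ exz); apply: IH.
Qed.

Lemma uadj_sym (T : digraph) : symmetric (@uadj T).
Proof. by move=> x y; rewrite /uadj orbC. Qed.

Lemma treeA (T : digraph) (e : rel (vtx T)) x y : oriented_tree T ->
  (forall a b, e a b -> uadj a b) -> connect e x y -> x != y -> uadj x y -> e x y.
Proof.
case=> _ _ _ _ acyc esub /connectP[p pth ->].
move: pth; move=> pth; case: (shortenP pth) => p' pth' uq _.
case: p' pth' uq => [|a [|b q]] /=.
- by rewrite eqxx.
- by rewrite andbT.
move=> pth' uq _ uxl.
exfalso; move/negP: (acyc [:: x, a, b & q] isT); apply; apply/andP; split; last exact: uq.
rewrite /cycle -cats1 cat_path /= andbT.
move: pth' => /andP[exa /andP[eab pq]].
rewrite (esub _ _ exa) (esub _ _ eab) (sub_path esub pq) /=.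
by rewrite uadj_sym.
Qed.

Definition lam_arc (G : digraph) : rel (vtx G + vtx G)%type :=
  fun p q => match p, q with
             | inl v, inr w => v == w
             | inr v, inl w => Defs.arc v w
             | _, _ => false end.
Definition Lam (G : digraph) : digraph := @Digraph (vtx G + vtx G)%type (@lam_arc G).

Lemma adj G H : hom G (Psi H) <-> hom (Lam G) H.
Proof.
split.
- case=> F hF.
  exists (fun p => match p with inl v => (val (F v)).1 | inr v => (val (F v)).2 end).
  move=> [v|v] [w|w] //=.
  + by move/eqP=> <-; exact: (valP (F v)).
  + by move=> avw; exact: (hF _ _ avw).
- case=> f hf.
  exists (fun v => exist (fun p : vtx H * vtx H => Defs.arc p.1 p.2)
            (f (inl v), f (inr v)) (hf (inl v) (inr v) (eqxx v)) : psi_vtx H).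
  by move=> v w avw; exact: (hf (inr v) (inl w) avw).
Qed.

Section Quot.
Variables (T : digraph) (t : vtx T -> nat) (col : rel (vtx T)) (b : bool).
Hypothesis hcol : forall x y, col x y = Defs.arc x y && (odd (t x) == b).
Hypothesis ht : forall x y, Defs.arc x y -> t y = (t x).+1.
Hypothesis tree : oriented_tree T.

Let eqv := connect (sym_closure col).

Lemma eqv_sym : connect_sym (sym_closure col).
Proof. by apply: sym_connect_sym => x y; rewrite /sym_closure orbC. Qed.

Lemma eqv_trans_eq a x w : eqv a x -> eqv a w = eqv x w.
Proof.
move=> ax; apply/idP/idP => h.
- by apply: connect_trans h; rewrite eqv_sym.
- exact: connect_trans h.
Qed.

Lemma cls_in x : [set y | eqv x y] \in classes eqv.
Proof. by apply/imsetP; exists x. Qed.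

Definition cls x : quot_vtx eqv := exist (fun C => C \in classes eqv) _ (cls_in x).

Lemma class_of (X : quot_vtx eqv) x : x \in val X -> val X = [set w | eqv x w].
Proof.
case: X => C /= /imsetP [a _ ->]; rewrite inE => ax.
by apply/setP => w; rewrite !inE (eqv_trans_eq _ ax).
Qed.

Lemma not_col_sep x y : Defs.arc x y -> ~~ (odd (t x) == b) -> ~~ eqv x y.
Proof.
case: tree => _ noloop anti _ _ axy nb; apply/negP => exy.
have nxy : x != y by apply/eqP => E; move: axy; rewrite E (negbTE (noloop y)).
have := treeA tree _ exy nxy _.
have sub : forall a c, sym_closure col a c -> uadj a c.
  by move=> a c; rewrite /sym_closure /uadj !hcol => /orP[/andP[-> _]|/andP[-> _]]; rewrite ?orbT.
move/(_ sub); rewrite /uadj axy => /(_ isT).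
rewrite /sym_closure !hcol axy (negbTE nb) /=.
by rewrite (negbTE (anti _ _ axy)).
Qed.

Lemma back G : hom (quot_loopless eqv) G -> hom T (Lam G).
Proof.
case=> phi hphi.
exists (fun x => if odd (t x) == b then inl (phi (cls x)) else inr (phi (cls x))).
move=> x y axy.
have oy : odd (t y) = ~~ odd (t x) by rewrite (ht axy) /=.
case E: (odd (t x) == b).
- have exy : eqv x y by apply: connect1; rewrite /sym_closure hcol axy E.
  have -> : cls x = cls y.
    by apply: val_inj => /=; apply/setP => w; rewrite !inE (eqv_trans_eq _ exy).
  have -> : (odd (t y) == b) = false by move: E; rewrite oy; case: (odd (t x)); case: b.
  by rewrite /= eqxx.
- have -> : (odd (t y) == b) = true by move: E; rewrite oy; case: (odd (t x)); case: b.
  apply: (hphi (cls x) (cls y)); rewrite /quot_arc /=.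
  apply/andP; split.
  + apply/negP => /eqP Exy.
    have : y \in val (cls x) by rewrite Exy inE; exact: connect0.
    by rewrite inE; apply/negP; apply: not_col_sep => //; rewrite E.
  + by apply/existsP; exists x; apply/existsP; exists y; rewrite !inE axy andbT; apply/andP; split; exact: connect0.
Qed.

Definition gval G (p : (vtx G + vtx G)%type) := match p with inl v => v | inr v => v end.

Lemma fwd G (f : vtx T -> vtx (Lam G)) :
  (forall x y, Defs.arc x y -> Defs.arc (f x) (f y)) ->
  (forall x, (if f x is inl _ then true else false) = (odd (t x) == b)) ->
  hom (quot_loopless eqv) G.
Proof.
move=> hf hside.
case: tree => /card_gt0P [x0 _] _ _ _ _.
pose g x := gval (f x).
have ginv : forall x y, eqv x y -> g x = g y.
  apply: connect_inv => x y.
  have H1 : forall x y, col x y -> g x = g y.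
    move=> u w; rewrite hcol => /andP[auw Eb].
    have := hf _ _ auw; have := hside u; rewrite Eb /g.
    by case: (f u) => [v|v] //; case: (f w) => [w'|w'] //= _ /eqP ->.
  by rewrite /sym_closure => /orP[/H1|/H1 ->].
pose phi (X : quot_vtx eqv) := g (odflt x0 [pick z in val X]).
have phiE : forall (X : quot_vtx eqv) z, z \in val X -> phi X = g z.
  move=> X z zX; rewrite /phi; case: pickP => [z' Hz'|none] /=.
  - apply: ginv; move: (class_of Hz') => E; rewrite E inE in zX; exact: zX.
  - by move: (none z); rewrite zX.
exists phi => X Y /andP[nXY /existsP[x /existsP[y /and3P[xX yY axy]]]].
rewrite (phiE _ _ xX) (phiE _ _ yY) /g.
case Eb: (odd (t x) == b).
- exfalso; move/negP: nXY; apply; apply/eqP.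
  rewrite (class_of xX) (class_of yY); apply/setP => w; rewrite !inE.
  apply: eqv_trans_eq; apply: connect1.
  by rewrite /sym_closure hcol axy Eb.
- have := hf _ _ axy; have := hside x; rewrite Eb.
  by case: (f x) => [v|v] //; case: (f y) => [w|w].
Qed.

End Quot.

Lemma cross (V : finType) (e : rel V) (S : {set V}) u v :
  connect e u v -> u \in S -> v \notin S -> exists x y, [/\ x \in S, y \notin S & e x y].
Proof.
move/connectP=> [p pth ->]; elim: p u pth => [|w p IH] u /=; first by move=> _ ->.
move=> /andP[euw pw] uS; case wS: (w \in S).
- exact: IH.
- by move=> _; exists u, w; rewrite wS.
Qed.

Lemma min_ex (P : nat -> Prop) n : P n -> exists m, P m /\ forall k, P k -> m <= k.
Proof.
elim/ltn_ind: n => n IH Pn.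
case: (classic (exists k, k < n /\ P k)) => [[k [lt Pk]]|no].
- exact: IH k lt Pk.
- exists n; split=> // k Pk; rewrite leqNgt; apply/negP => lt; apply: no; by exists k.
Qed.

Definition rS (T : digraph) (S : {set vtx T}) : rel (vtx T) :=
  fun u v => [&& uadj u v, u \in S & v \in S].

Definition good (T : digraph) (S : {set vtx T}) (t : vtx T -> nat) :=
  [/\ (forall x y, x \in S -> y \in S -> Defs.arc x y -> t y = (t x).+1),
      (forall z, z \in S -> (#|vtx T| - #|S| < t z) && (t z <= #|vtx T| + #|S|)) &
      (forall a c, a \in S -> c \in S -> connect (rS S) a c)].

Lemma rS_sym T S : connect_sym (@rS T S).
Proof. by apply: sym_connect_sym => u v; rewrite /rS uadj_sym; case: (u \in S); case: (v \in S); rewrite ?andbF ?andbT. Qed.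

Lemma heights T : oriented_tree T -> exists t, @path_hom T (2 * #|vtx T|) t.
Proof.
move=> tree; have [/card_gt0P [r _] noloop anti conn _] := tree.
suff: forall n S t, #|~: S| <= n -> r \in S -> @good T S t ->
        exists t, @path_hom T (2 * #|vtx T|) t.
  move=> H; apply: (H #|~: [set r]| [set r] (fun _ => #|vtx T|)) => //.
  - by rewrite inE.
  - split.
    + move=> x y; rewrite !inE => /eqP -> /eqP ->; by rewrite (negbTE (noloop r)).
    + move=> z _; rewrite cards1.
      have : 0 < #|vtx T| by apply/card_gt0P; exists r.
      move=> h; apply/andP; split; lia.
    + by move=> a c; rewrite !inE => /eqP -> /eqP ->; exact: connect0.
have fin : forall (S : {set vtx T}) t, (forall z, z \in S) -> @good T S t ->
    exists t, @path_hom T (2 * #|vtx T|) t.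
  move=> S t allS [g1 g2 g3]; exists t; split.
  + move=> z; move/andP: (g2 z (allS z)) => [_]; have := max_card S; lia.
  + by move=> x y axy; apply: g1.
elim=> [|n IH] S t hc rS0 gS.
- apply: (fin S t) => // z.
  apply/contraT => nz; move: hc; rewrite leqn0 => /eqP/cards0_eq/setP/(_ z).
  by rewrite !inE nz.
have [allS|/forallPn [v nv]] := boolP [forall z, z \in S].
  by apply: (fin S t) => // z; move/forallP: allS.
case: gS => g1 g2 g3.
have [x [y [xS yS uxy]]] := cross (conn r v) rS0 nv.
have nxy : x != y by apply/eqP => E; move: xS; rewrite E (negbTE yS).
have uniqN : forall z, z \in S -> uadj y z -> z = x.
  move=> z zS uyz; apply/eqP; apply/contraT => nzx.
  pose e := fun u w => uadj u w && ~~ ((u == x) && (w == y)).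
  have esub : forall u w, e u w -> uadj u w by move=> u w /andP[].
  have cxz : connect e x z.
    apply: (connect_sub _ (g3 x z xS zS)) => u w /and3P[uuw uS wS].
    apply: connect1; rewrite /e uuw /=; apply/negP => /andP[_ /eqP E].
    by move: wS; rewrite E (negbTE yS).
  have cxy : connect e x y.
    apply: (connect_trans cxz); apply: connect1; rewrite /e uadj_sym uyz /=.
    by rewrite (negbTE nzx).
  have := treeA tree esub cxy nxy uxy.
  by rewrite /e uxy !eqxx.
have cardS : #|y |: S| = #|S|.+1 by rewrite cardsU1 yS.
have ltS : #|S| < #|vtx T|.
  have := cardsC S; have : 0 < #|~: S| by apply/card_gt0P; exists y; rewrite inE.
  lia.
pose t' := fun z => if z == y then (if Defs.arc x y then (t x).+1 else (t x).-1) else t z.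
have tS : forall z, z \in S -> t' z = t z.
  move=> z zS; rewrite /t'; case: eqP => // E; move: zS; by rewrite E (negbTE yS).
have tx := g2 x xS.
apply: (IH (y |: S) t').
- have := cardsC (y |: S); have := cardsC S; lia.
- by rewrite inE rS0 orbT.
split.
- move=> u w; rewrite !inE => /orP[/eqP ->|uS] /orP[/eqP ->|wS] auw.
  + by move: auw; rewrite (negbTE (noloop y)).
  + have E := uniqN w wS (introT orP (or_introl auw)); subst w.
    rewrite (tS x xS) /t' eqxx.
    have -> : Defs.arc x y = false by apply/negbTE; apply: anti.
    move: tx; lia.
  + have E := uniqN u uS (introT orP (or_intror auw)); subst u.
    by rewrite (tS x xS) /t' eqxx auw.
  + by rewrite (tS u uS) (tS w wS); apply: g1.
- move=> z; rewrite !inE cardS => /orP[/eqP ->|zS].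
  + rewrite /t' eqxx; case: (Defs.arc x y); move: tx; lia.
  + rewrite (tS z zS); move: (g2 z zS); lia.
- have sub : subrel (rS S) (connect (rS (y |: S))).
    move=> u w /and3P[uuw uS wS]; apply: connect1.
    by rewrite /rS uuw !inE uS wS !orbT.
  have cyx : connect (rS (y |: S)) y x.
    by apply: connect1; rewrite /rS uadj_sym uxy !inE eqxx xS orbT.
  have cS : forall a, a \in y |: S -> connect (rS (y |: S)) y a.
    move=> a; rewrite !inE => /orP[/eqP ->|aS]; first exact: connect0.
    by apply: (connect_trans cyx); apply: (connect_sub sub); apply: g3.
  move=> a c aS cS'; apply: (connect_trans (y := y)).
    by rewrite rS_sym; apply: cS.
  exact: cS.
Qed.

Theorem mainTheorem12 (H : digraph) (TT : digraph -> Prop) :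
  (forall T, TT T -> oriented_tree T) ->
  complete_obstructions TT H ->
  complete_obstructions (psi_sproink TT) (Psi H).
Proof.
move=> hT hc G; split.
- move=> hG [D [[T [TT_T [h [t [_ [_ ht] hD]]]]] hDG]].
  apply: ((hc (Lam G)).1 ((adj G H).1 hG)); exists T; split=> //.
  case: hD => E; subst D.
  + apply: (@back T t (blue_arc t) false _ ht (hT _ TT_T) G hDG).
    by move=> x y; rewrite /blue_arc; case: odd.
  + apply: (@back T t (red_arc t) true _ ht (hT _ TT_T) G hDG).
    by move=> x y; rewrite /red_arc; case: odd.
- move=> hn; apply/(adj G H).2; apply/(hc (Lam G)).2 => [[T [TT_T [f hf]]]].
  apply: hn; have tree := hT _ TT_T.
  have [t0 pt0] := heights tree.
  have [h [[t pt] hmin]] :=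
    @min_ex (fun h => exists t, @path_hom T h t) _ (ex_intro _ t0 pt0).
  have ht := pt.2.
  have [c hside] : exists c, forall x,
      (if f x is inl _ then true else false) = (odd (t x) == c).
    case: (tree) => /card_gt0P [x0 _] _ _ conn _.
    pose F x := (if f x is inl _ then true else false) (+) odd (t x).
    have inv : forall x y, uadj x y -> F x = F y.
      have H1 : forall x y, Defs.arc x y -> F x = F y.
        move=> x y axy; rewrite /F (ht x y axy) /=; have := hf _ _ axy.
        by case: (f x) => ?; case: (f y) => ? //= _; case: odd.
      by move=> x y /orP[/H1 //|/H1 E]; rewrite E.
    exists (~~ F x0) => x; rewrite (connect_inv inv (conn x0 x)) /F.
    by case: (f x) => ?; case: odd.
  have ahh : alg_height T h.
    split; first by exists t.
    by move=> h' t' pt'; apply: hmin; exists t'.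
  case: c hside => hside.
  + have hq := @fwd T t (red_arc t) true _ tree G f hf hside.
    exists (quot_loopless (red_eq t)); split; last first.
      apply: hq; by move=> x y; rewrite /red_arc; case: odd.
    exists T; split=> //; exists h, t; split=> //; by right.
  + have hq := @fwd T t (blue_arc t) false _ tree G f hf hside.
    exists (quot_loopless (blue_eq t)); split; last first.
      apply: hq; by move=> x y; rewrite /blue_arc; case: odd.
    exists T; split=> //; exists h, t; split=> //; by left.
Qed.
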